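(* Let $M\in\mathbb{R}^{2n\times 2n}$ be symmetric positive definite, let $1\le k\le n$, and let $J_{2m}=\left[\begin{smallmatrix}0&I_m\\-I_m&0\end{smallmatrix}\right]$. Let $\tilde N=\operatorname{diag}(N,N)$ with $N=\operatorname{diag}(\nu_1,\ldots,\nu_k)$, $0<\nu_1<\nu_2<\cdots<\nu_k$. Consider the problem $$\min_{X\in\mathbb{R}^{2n\times 2k}} f(X):=\operatorname{tr}(\tilde N X^TMX)\quad\text{s.t.}\quad X^TJ_{2n}X=J_{2k}.$$ A matrix $X\in\mathbb{R}^{2n\times 2k}$ is a critical point of this problem (i.e. $X^TJ_{2n}X=J_{2k}$ and there is a skew-symmetric $L\in\mathbb{R}^{2k\times 2k}$ with $MX\tilde N=J_{2n}XL$) if and only if its columns form a symplectic eigenvector set of $M$, i.e. $X^TJ_{2n}X=J_{2k}$ and $$MX=J_{2n}X\begin{bmatrix}0&-\Delta\\ \Delta&0\end{bmatrix}$$ for some diagonal matrix $\Delta=\operatorname{diag}(d_{i_1},\ldots,d_{i_k})$ whose entries are symplectic eigenvalues of $M$ (indices $i_1,\ldots,i_k$ from $\{1,\ldots,n\}$).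
   Context: Symplectic eigenvalues are in the sense of Williamson's theorem: there is a symplectic $S$ ($S^TJ_{2n}S=J_{2n}$) with $S^TMS=\operatorname{diag}(D,D)$, $D=\operatorname{diag}(d_1,\ldots,d_n)$, $d_j>0$; the column pairs $[s_j,s_{n+j}]$ are symplectic eigenvectors associated with $d_j$. In the critical case one has $X^TMX=\operatorname{diag}(\Delta,\Delta)$ and Lagrange multiplier $L=\left[\begin{smallmatrix}0&-\Delta N\\ \Delta N&0\end{smallmatrix}\right]$. *)

(* Defs.v *)
From HB Require Import structures.
From mathcomp Require Import all_boot all_order all_algebra.
From mathcomp Require Import reals.
Set Implicit Arguments. Unset Strict Implicit. Unset Printing Implicit Defensive.
Import Order.TTheory GRing.Theory Num.Theory.
Local Open Scope ring_scope.

Definition Jmx (R : realType) (m : nat) : 'M[R]_(m + m) :=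
  block_mx 0 1%:M (- 1%:M) 0.

Definition spd (R : realType) (p : nat) (M : 'M[R]_p) : Prop :=
  M^T = M /\ forall x : 'cV[R]_p, x != 0 -> 0 < (x^T *m M *m x) 0 0.

Definition symplectic (R : realType) (n : nat) (S : 'M[R]_(n + n)) : Prop :=
  S^T *m Jmx R n *m S = Jmx R n.

Definition williamson (R : realType) (n : nat) (M : 'M[R]_(n + n))
    (S : 'M[R]_(n + n)) (d : 'rV[R]_n) : Prop :=
  symplectic S /\ (forall j, 0 < d 0 j) /\
  S^T *m M *m S = block_mx (diag_mx d) 0 0 (diag_mx d).

Definition critical_point (R : realType) (n k : nat) (M : 'M[R]_(n + n))
    (nu : 'rV[R]_k) (X : 'M[R]_(n + n, k + k)) : Prop :=
  X^T *m Jmx R n *m X = Jmx R k /\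
  exists L : 'M[R]_(k + k), L^T = - L /\
    M *m X *m block_mx (diag_mx nu) 0 0 (diag_mx nu) = Jmx R n *m X *m L.

Definition sympl_eigvec_set (R : realType) (n k : nat) (M : 'M[R]_(n + n))
    (X : 'M[R]_(n + n, k + k)) : Prop :=
  X^T *m Jmx R n *m X = Jmx R k /\
  exists delta : 'rV[R]_k,
    (exists (S : 'M[R]_(n + n)) (d : 'rV[R]_n), williamson M S d /\
       exists idx : 'I_k -> 'I_n, forall j, delta 0 j = d 0 (idx j)) /\
    M *m X = Jmx R n *m X *m block_mx 0 (- diag_mx delta) (diag_mx delta) 0.

(* Main.v *)
Require Import Defs.
From HB Require Import structures.
From mathcomp Require Import all_boot all_order all_algebra.
From mathcomp Require Import reals.
From mathcomp Require Import classical_sets.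
From mathcomp Require Import ring lra zify.
Import Order.TTheory GRing.Theory Num.Theory.
Local Open Scope ring_scope.
Set Implicit Arguments. Unset Strict Implicit. Unset Printing Implicit Defensive.

(* Proof strategy: a variational (infimum-based) construction of
   symplectic eigenpairs yields Williamson's decomposition; the critical-point
   equations are then solved blockwise. *)

Definition bf (R : realType) (N : nat) (A : 'M[R]_N) (x y : 'cV[R]_N) : R :=
  (x^T *m A *m y) 0 0.

Lemma bf_sym (R : realType) N (A : 'M[R]_N) x y : bf A x y = bf A^T y x.
Proof.
rewrite /bf.
have -> : (y^T *m A^T *m x) = (x^T *m A *m y)^T by rewrite !trmx_mul trmxK mulmxA.
by rewrite [RHS]mxE.
Qed.

Lemma bfDr (R : realType) N (A : 'M[R]_N) x y z : bf A x (y + z) = bf A x y + bf A x z.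
Proof. by rewrite /bf mulmxDr mxE. Qed.
Lemma bfZr (R : realType) N (A : 'M[R]_N) x a y : bf A x (a *: y) = a * bf A x y.
Proof. by rewrite /bf -scalemxAr mxE. Qed.
Lemma bfNr (R : realType) N (A : 'M[R]_N) x y : bf A x (- y) = - bf A x y.
Proof. by rewrite /bf mulmxN mxE. Qed.
Lemma bfBr (R : realType) N (A : 'M[R]_N) x y z : bf A x (y - z) = bf A x y - bf A x z.
Proof. by rewrite bfDr bfNr. Qed.
Lemma bf0r (R : realType) N (A : 'M[R]_N) x : bf A x 0 = 0.
Proof. by rewrite /bf mulmx0 mxE. Qed.
Lemma bf_sumr (R : realType) N (A : 'M[R]_N) x (I : Type) (r : seq I) (P : pred I) (F : I -> 'cV[R]_N) :
  bf A x (\sum_(i <- r | P i) F i) = \sum_(i <- r | P i) bf A x (F i).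
Proof. by rewrite /bf mulmx_sumr summxE. Qed.
Lemma bfDl (R : realType) N (A : 'M[R]_N) x y z : bf A (x + y) z = bf A x z + bf A y z.
Proof. by rewrite bf_sym bfDr -!(bf_sym A). Qed.
Lemma bfZl (R : realType) N (A : 'M[R]_N) x a y : bf A (a *: x) y = a * bf A x y.
Proof. by rewrite bf_sym bfZr -!(bf_sym A). Qed.
Lemma bfNl (R : realType) N (A : 'M[R]_N) x y : bf A (- x) y = - bf A x y.
Proof. by rewrite bf_sym bfNr -!(bf_sym A). Qed.
Lemma bfBl (R : realType) N (A : 'M[R]_N) x y z : bf A (x - y) z = bf A x z - bf A y z.
Proof. by rewrite bfDl bfNl. Qed.
Lemma bf0l (R : realType) N (A : 'M[R]_N) x : bf A 0 x = 0.
Proof. by rewrite bf_sym bf0r. Qed.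
Lemma bf_mulr (R : realType) N (A : 'M[R]_N) x y : bf A x y = bf 1%:M x (A *m y).
Proof. by rewrite /bf mulmx1 mulmxA. Qed.
Lemma bf_conj (R : realType) N (A C : 'M[R]_N) x y : bf (A^T *m C *m A) x y = bf C (A *m x) (A *m y).
Proof. by rewrite /bf trmx_mul !mulmxA. Qed.

Definition nrm2 (R : realType) N (x : 'cV[R]_N) := bf 1%:M x x.

Lemma nrm2E (R : realType) N (x : 'cV[R]_N) : nrm2 x = \sum_i x i 0 ^+ 2.
Proof. rewrite /nrm2 /bf mulmx1 mxE; apply: eq_bigr => i _; by rewrite !mxE expr2. Qed.

Lemma nrm2_ge0 (R : realType) N (x : 'cV[R]_N) : 0 <= nrm2 x.
Proof. by rewrite nrm2E sumr_ge0 // => i _; rewrite sqr_ge0. Qed.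

Lemma nrm2_eq0 (R : realType) N (x : 'cV[R]_N) : nrm2 x = 0 -> x = 0.
Proof.
rewrite nrm2E => /eqP; rewrite psumr_eq0; last by move=> i _; rewrite sqr_ge0.
move=> /allP H; apply/matrixP=> i j; rewrite (ord1 j) mxE.
by have /implyP/(_ isT) := H i (mem_index_enum _); rewrite sqrf_eq0 => /eqP.
Qed.

Lemma nrm2_gt0 (R : realType) N (x : 'cV[R]_N) : x != 0 -> 0 < nrm2 x.
Proof.
move=> nz; rewrite lt_neqAle nrm2_ge0 andbT eq_sym; apply/eqP => /nrm2_eq0 H.
by rewrite H eqxx in nz.
Qed.

Lemma le_sq_nrm2 (R : realType) N (x : 'cV[R]_N) i : x i 0 ^+ 2 <= nrm2 x.
Proof.
rewrite nrm2E (bigD1 i) //= lerDl sumr_ge0 // => k _; exact: sqr_ge0.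
Qed.

Lemma quad_bound (R : realType) N (A : 'M[R]_N) (z : 'cV[R]_N) :
  bf A z z <= (\sum_i \sum_k `|A k i|) * nrm2 z.
Proof.
rewrite /bf mxE mulr_suml; apply: ler_sum => k _; rewrite mxE mulr_suml mulr_suml.
apply: ler_sum => i _; rewrite !mxE.
have h1 := le_sq_nrm2 z i; have h2 := le_sq_nrm2 z k.
set s := nrm2 z in h1 h2 *; set a := z i 0 in h1 *; set b := z k 0 in h2 *.
set c := A i k.
have hab : `|a| * `|b| <= s.
  have ha : `|a| ^+ 2 <= s by rewrite real_normK ?num_real.
  have hb : `|b| ^+ 2 <= s by rewrite real_normK ?num_real.
  have := normr_ge0 a; have := normr_ge0 b; nra.
apply: le_trans (ler_norm _) _.
rewrite !normrM mulrAC mulrC; apply: ler_wpM2l => //.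
Qed.

Lemma coercive (R : realType) m (B : 'M[R]_m) : B^T = B -> (forall z, 0 <= bf B z z) ->
  B \in unitmx -> exists c, 0 < c /\ forall z, c * nrm2 z <= bf B z z.
Proof.
move=> Bs psd Bu.
set C := invmx B.
set K := 1 + \sum_i \sum_k `|C k i|.
have Kpos : 0 < K.
  by rewrite /K ltr_pwDl // sumr_ge0 // => i _; rewrite sumr_ge0.
exists K^-1; split; first by rewrite invr_gt0.
move=> z; set y := C *m z.
have By : B *m y = z by rewrite /y /C mulKVmx.
set t := K^-1.
have h := psd (z - t *: y).
rewrite !bfBl !bfBr !bfZl !bfZr in h.
have e1 : bf B z y = nrm2 z by rewrite bf_mulr By.
have e2 : bf B y z = nrm2 z by rewrite bf_sym Bs e1.
have e3 : bf B y y <= K * nrm2 z.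
  rewrite bf_mulr By bf_sym trmx1 /y -bf_mulr.
  apply: le_trans (quad_bound C z) _; apply: ler_wpM2r; first exact: nrm2_ge0.
  by rewrite /K lerDr.
have tK : t * K = 1 by rewrite /t mulVf // gt_eqF.
have tpos : 0 < t by rewrite invr_gt0.
have e4 : t * t * bf B y y <= t * nrm2 z.
  have : t * t * bf B y y <= t * t * (K * nrm2 z) by apply: ler_wpM2l => //; nra.
  have -> : t * t * (K * nrm2 z) = t * nrm2 z by rewrite -mulrA (mulrA t K) tK mul1r.
  done.
rewrite e1 e2 in h.
lra.
Qed.

Lemma J_tr (R : realType) n : (Jmx R n)^T = - Jmx R n.
Proof.
by rewrite /Jmx tr_block_mx !trmx0 trmx1 linearN /= trmx1 opp_block_mx !oppr0 opprK.
Qed.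

Lemma J_mulJ (R : realType) n : Jmx R n *m Jmx R n = - 1%:M.
Proof.
rewrite /Jmx mulmx_block !mulmx0 !mul0mx !mulmx1 !mul1mx !addr0 !add0r.
by rewrite [X in _ = - X](scalar_mx_block n n) opp_block_mx oppr0.
Qed.

Lemma J_trJ (R : realType) n : (Jmx R n)^T *m Jmx R n = 1%:M.
Proof. by rewrite J_tr mulNmx J_mulJ opprK. Qed.

Lemma J_Jtr (R : realType) n : Jmx R n *m (Jmx R n)^T = 1%:M.
Proof. by rewrite J_tr mulmxN J_mulJ opprK. Qed.

Lemma J_unit (R : realType) n : Jmx R n \in unitmx.
Proof. by case/mulmx1_unit: (J_Jtr R n). Qed.

Lemma bfJ_skew (R : realType) n (x y : 'cV[R]_(n + n)) : bf (Jmx R n) x y = - bf (Jmx R n) y x.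
Proof. by rewrite bf_sym J_tr /bf mulmxN mulNmx mxE. Qed.

Lemma bfJ_xx (R : realType) n (x : 'cV[R]_(n + n)) : bf (Jmx R n) x x = 0.
Proof. have := bfJ_skew x x; lra. Qed.

Lemma bf_block (R : realType) N (A B C D : 'M[R]_N) (x y x' y' : 'cV[R]_N) :
  bf (block_mx A B C D) (col_mx x y) (col_mx x' y') =
  bf A x x' + bf B x y' + bf C y x' + bf D y y'.
Proof.
rewrite /bf tr_col_mx mul_row_block !mul_row_col !mulmxDl !(mxE, addrA). rewrite -!addrA; congr (_ + _); rewrite addrC -!addrA; congr (_ + _); by rewrite addrC.
Qed.

Lemma bfm0 (R : realType) N (x y : 'cV[R]_N) : bf 0 x y = 0.
Proof. by rewrite /bf mulmx0 mul0mx mxE. Qed.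

Lemma nrm2_col (R : realType) N (x y : 'cV[R]_N) : nrm2 (col_mx x y) = nrm2 x + nrm2 y.
Proof.
by rewrite /nrm2 (scalar_mx_block N N) bf_block !bfm0 addr0 addr0.
Qed.

Lemma entry_bf (R : realType) m N p (A : 'M[R]_(N, m)) (C : 'M[R]_N) (B : 'M[R]_(N, p)) i l :
  (A^T *m C *m B) i l = bf C (col i A) (col l B).
Proof.
rewrite /bf !mxE; apply: eq_bigr => k _; rewrite !mxE; congr (_ * _).
by apply: eq_bigr => r _; rewrite !mxE.
Qed.

Lemma twoJ_le (R : realType) n (x y : 'cV[R]_(n + n)) : 2 * bf (Jmx R n) x y <= nrm2 x + nrm2 y.
Proof.
have := nrm2_ge0 (x - Jmx R n *m y).
rewrite /nrm2 bfBl !bfBr -/(nrm2 x).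
have -> : bf 1%:M (Jmx R n *m y) (Jmx R n *m y) = nrm2 y.
  by rewrite -bf_conj mulmx1 J_trJ.
have -> : bf 1%:M x (Jmx R n *m y) = bf (Jmx R n) x y by rewrite -bf_mulr.
have -> : bf 1%:M (Jmx R n *m y) x = bf (Jmx R n) x y by rewrite bf_sym trmx1 -bf_mulr.
rewrite /nrm2; lra.
Qed.

Definition Inv (R : realType) n (M : 'M[R]_(n + n)) (j : nat) (U V : 'M[R]_(n + n, n)) (d : 'rV[R]_n) : Prop :=
  (forall i l : 'I_n, (i < j)%N -> (l < j)%N ->
     [/\ bf (Jmx R n) (col i U) (col l U) = 0, bf (Jmx R n) (col i V) (col l V) = 0 &
         bf (Jmx R n) (col i U) (col l V) = (i == l)%:R]) /\
  (forall i : 'I_n, (i < j)%N ->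
     [/\ 0 < d 0 i, M *m col i U = d 0 i *: (Jmx R n *m col i V) &
         M *m col i V = - d 0 i *: (Jmx R n *m col i U)]).

Definition inW (R : realType) n (j : nat) (U V : 'M[R]_(n + n, n)) (z : 'cV[R]_(n + n)) :=
  forall i : 'I_n, (i < j)%N -> bf (Jmx R n) (col i U) z = 0 /\ bf (Jmx R n) (col i V) z = 0.

Definition Ps (R : realType) n (j : nat) (U V : 'M[R]_(n + n, n)) : 'M[R]_(n + n) :=
  1%:M + \sum_(i < n | (i < j)%N)
     (col i U *m ((col i V)^T *m Jmx R n) - col i V *m ((col i U)^T *m Jmx R n)).

Lemma mul_bf (R : realType) N (A : 'M[R]_N) (u v z : 'cV[R]_N) :
  u *m (v^T *m A *m z) = bf A v z *: u.
Proof. by rewrite {1}[v^T *m A *m z]mx11_scalar mul_mx_scalar. Qed.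

Lemma sum_delta (R : realType) n (P : pred 'I_n) (F : 'I_n -> R) l :
  P l -> \sum_(i | P i) F i * (i == l)%:R = F l.
Proof.
move=> Pl; rewrite (bigD1 l) //= eqxx mulr1 big1 ?addr0 // => i /andP [_ /negbTE ->].
by rewrite mulr0.
Qed.

Lemma sum_delta' (R : realType) n (P : pred 'I_n) (F : 'I_n -> R) l :
  P l -> \sum_(i | P i) F i * (l == i)%:R = F l.
Proof. by move=> Pl; rewrite -(sum_delta F Pl); apply: eq_bigr => i _; rewrite eq_sym. Qed.

Lemma Ps_mul (R : realType) n j (U V : 'M[R]_(n + n, n)) z :
  Ps j U V *m z = z + \sum_(i < n | (i < j)%N)
     (bf (Jmx R n) (col i V) z *: col i U - bf (Jmx R n) (col i U) z *: col i V).
Proof.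
rewrite /Ps mulmxDl mul1mx mulmx_suml; congr (_ + _); apply: eq_bigr => i _.
by rewrite mulmxBl -!mulmxA !(mulmxA (_^T)) !mul_bf.
Qed.

Lemma inW_Ps (R : realType) n (M : 'M[R]_(n + n)) j U V d z :
  Inv M j U V d -> inW j U V (Ps j U V *m z).
Proof.
move=> [H1 _] l hl; rewrite Ps_mul !bfDr !bf_sumr; split.
- rewrite (eq_bigr (fun i => - (bf (Jmx R n) (col i U) z * (l == i)%:R))).
    by rewrite sumrN sum_delta' // subrr.
  move=> i hi; have [a b c] := H1 l i hl hi.
  by rewrite bfBr !bfZr a c mulr0 sub0r.
- rewrite (eq_bigr (fun i => - (bf (Jmx R n) (col i V) z * (l == i)%:R))).
    by rewrite sumrN sum_delta' // subrr.
  move=> i hi; have [_ b _] := H1 l i hl hi; have [_ _ c] := H1 i l hi hl.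
  by rewrite bfBr !bfZr b mulr0 subr0 (bfJ_skew (col l V)) c mulrN eq_sym.
Qed.

Lemma Ps_fix (R : realType) n j (U V : 'M[R]_(n + n, n)) z :
  inW j U V z -> Ps j U V *m z = z.
Proof.
move=> hz; rewrite Ps_mul big1 ?addr0 // => i hi.
by have [a b] := hz i hi; rewrite a b !scale0r subrr.
Qed.

Lemma bf_Ps_r (R : realType) n j (U V : 'M[R]_(n + n, n)) x z :
  inW j U V x -> bf (Jmx R n) x (Ps j U V *m z) = bf (Jmx R n) x z.
Proof.
move=> hx; rewrite Ps_mul bfDr bf_sumr big1 ?addr0 // => i hi.
have [a b] := hx i hi.
by rewrite bfBr !bfZr (bfJ_skew x) (bfJ_skew x) a b oppr0 !mulr0 subrr.
Qed.

Lemma trmul0 (R : realType) N (u r : 'cV[R]_N) : bf 1%:M u r = 0 -> u^T *m r = 0.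
Proof.
move=> h; rewrite [u^T *m r]mx11_scalar; move: h; rewrite /bf mulmx1 => ->.
by rewrite raddf0.
Qed.

Lemma Ps_tr_fix (R : realType) n j (U V : 'M[R]_(n + n, n)) r :
  (forall i : 'I_n, (i < j)%N -> bf 1%:M (col i U) r = 0 /\ bf 1%:M (col i V) r = 0) ->
  (Ps j U V)^T *m r = r.
Proof.
move=> hr; rewrite /Ps linearD /= trmx1 mulmxDl mul1mx linear_sum /= mulmx_suml.
rewrite big1 ?addr0 // => i hi; have [a b] := hr i hi.
rewrite linearB /= !trmx_mul !trmxK mulmxBl -!mulmxA !trmul0 // !mulmx0.
by rewrite subrr.
Qed.


Lemma mxtrace_sumE (R : realType) N (I : Type) (r : seq I) (P : pred I) (F : I -> 'M[R]_N) :
  \tr (\sum_(i <- r | P i) F i) = \sum_(i <- r | P i) \tr (F i).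
Proof. exact: raddf_sum. Qed.

Lemma mxtraceBE (R : realType) N (A B : 'M[R]_N) : \tr (A - B) = \tr A - \tr B.
Proof. exact: raddfB. Qed.

Lemma tr_Ps (R : realType) n j (U V : 'M[R]_(n + n, n)) (M : 'M[R]_(n + n)) d :
  (j <= n)%N -> Inv M j U V d -> \tr (Ps j U V) = (n + n)%:R - (j + j)%:R.
Proof.
move=> jn [H1 _]; rewrite /Ps mxtraceD mxtrace1 mxtrace_sumE.
rewrite (eq_bigr (fun _ => - 2%:R)); last first.
  move=> i hi; rewrite mxtraceBE (mxtrace_mulC (col i U)) (mxtrace_mulC (col i V)).
  have e : forall (u v : 'cV[R]_(n + n)), \tr ((v^T *m Jmx R n) *m u) = bf (Jmx R n) v u.
    by move=> u v; rewrite /mxtrace big_ord1.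
  rewrite !e; have [a b c] := H1 i i hi hi.
  by rewrite bfJ_skew c eqxx /= mulr1n; lra.
rewrite -(big_ord_widen n (fun _ => - 2%:R : R) jn) sumr_const card_ord.
by rewrite -mulr_natr !natrD; lra.
Qed.

Lemma bfDm (R : realType) N (A B : 'M[R]_N) x y : bf (A + B) x y = bf A x y + bf B x y.
Proof. by rewrite /bf mulmxDr mulmxDl mxE. Qed.
Lemma bfZm (R : realType) N (A : 'M[R]_N) a x y : bf (a *: A) x y = a * bf A x y.
Proof. by rewrite /bf -scalemxAr -scalemxAl mxE. Qed.
Lemma bf_mulm (R : realType) N (A B : 'M[R]_N) x y : bf A x (B *m y) = bf (A *m B) x y.
Proof. by rewrite /bf !mulmxA. Qed.

Lemma inWZ (R : realType) n j (U V : 'M[R]_(n + n, n)) a z : inW j U V z -> inW j U V (a *: z).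
Proof. by move=> h i hi; have [h1 h2] := h i hi; rewrite !bfZr h1 h2 mulr0. Qed.

Lemma spd_psd (R : realType) N (M : 'M[R]_N) : spd M -> forall x, 0 <= bf M x x.
Proof.
move=> [_ Mpd] x; case: (eqVneq x 0) => [->|nz]; first by rewrite bf0l.
exact/ltW/Mpd.
Qed.

Lemma exists_nz (R : realType) N (P : 'M[R]_N) : P != 0 -> exists z : 'cV[R]_N, P *m z != 0.
Proof.
move=> Pnz; case: (boolP [exists c : 'I_N, col c P != 0]).
  move=> /existsP [c hc]; exists (delta_mx c (0 : 'I_1)); by rewrite -colE.
rewrite negb_exists => /forallP h; move: Pnz => /eqP []; apply/matrixP => r c.
by have := h c; rewrite negbK => /eqP /matrixP /(_ r 0); rewrite !mxE.
Qed.

Lemma aux1 (R : realType) (c q l w s : R) : 0 < c -> 0 < w ->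
  c * s <= q - 2 * l * w -> 2 * w <= s -> q < (l + c) * (2 * w) -> False.
Proof. move=> *; nra. Qed.

Lemma aux2 (R : realType) (a b c : R) : 0 <= a -> 0 <= b -> 0 <= c ->
  a + b + c = 0 -> b = 0 /\ c = 0.
Proof. move=> *; split; lra. Qed.

Lemma pair_exists (R : realType) n (M : 'M[R]_(n + n)) j U V d :
  spd M -> (j < n)%N -> Inv M j U V d ->
  exists (x y : 'cV[R]_(n + n)) (lam : R),
    [/\ 0 < lam, inW j U V x, inW j U V y, bf (Jmx R n) x y = 1 &
     M *m x = lam *: (Jmx R n *m y) /\ M *m y = - lam *: (Jmx R n *m x)].
Proof.
move=> Mspd jn hI; have Mpsd := spd_psd Mspd; have [Ms Mpd] := Mspd.
set J := Jmx R n; set P := Ps j U V.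
have trP := tr_Ps (ltnW jn) hI.
have Pnz : P != 0.
  apply/eqP => P0; move: trP; rewrite -/P P0 mxtrace0 => /eqP; rewrite eq_sym subr_eq0.
  by rewrite eqr_nat => /eqP h; lia.
have [z Pz] := exists_nz Pnz.
set x0 := P *m z; set y0 := P *m (J^T *m x0).
have Wx0 : inW j U V x0 := inW_Ps z hI.
have Wy0 : inW j U V y0 := inW_Ps _ hI.
have w0 : bf J x0 y0 = nrm2 x0.
  by rewrite /y0 /P bf_Ps_r // bf_mulm J_Jtr.
have x0pos : 0 < nrm2 x0 := nrm2_gt0 Pz.
pose S : set R := fun r => exists x y, [/\ inW j U V x, inW j U V y, 0 < bf J x y &
   r = (bf M x x + bf M y y) / (2 * bf J x y)].
set lam := inf S.
have S0 : (S !=set0)%classic.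
  by exists ((bf M x0 x0 + bf M y0 y0) / (2 * bf J x0 y0)), x0, y0; split => //; rewrite w0.
have Slb : lbound S 0.
  move=> r [x [y [_ _ wp ->]]]; apply: divr_ge0; last by apply: mulr_ge0 => //; exact: ltW.
  by apply: addr_ge0; apply: Mpsd.
have Shlb : has_lbound S by exists 0.
have lam0 : 0 <= lam := lb_le_inf S0 Slb.
have key : forall x y, inW j U V x -> inW j U V y ->
    2 * lam * bf J x y <= bf M x x + bf M y y.
  move=> x y Wx Wy; case: (ltrP 0 (bf J x y)) => h.
    have Sr : S ((bf M x x + bf M y y) / (2 * bf J x y)) by exists x, y.
    have := ge_inf Shlb Sr; rewrite -/lam ler_pdivlMr; last by rewrite mulr_gt0.
    lra.
  have := Mpsd x; have := Mpsd y; nra.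
set Q := P^T *m M *m P + (1%:M - P)^T *m (1%:M - P).
set B := block_mx Q (- lam *: (P^T *m J *m P)) (- lam *: (P^T *m J^T *m P)) Q.
have bfQ : forall x, bf Q x x = bf M (P *m x) (P *m x) + nrm2 (x - P *m x).
  move=> x; rewrite bfDm bf_conj; congr (_ + _).
  by rewrite -[X in bf (_ *m X)]mul1mx mulmxA bf_conj /nrm2 mulmxBl mul1mx.
have quadB : forall x y, bf B (col_mx x y) (col_mx x y) =
    (bf M (P *m x) (P *m x) + bf M (P *m y) (P *m y) - 2 * lam * bf J (P *m x) (P *m y))
    + nrm2 (x - P *m x) + nrm2 (y - P *m y).
  move=> x y; rewrite bf_block !bfQ !bfZm !bf_conj (bf_sym J^T) trmxK; ring.
have psdB : forall w, 0 <= bf B w w.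
  move=> w; rewrite -(vsubmxK w) quadB.
  have := key _ _ (inW_Ps (usubmx w) hI) (inW_Ps (dsubmx w) hI).
  have := nrm2_ge0 (usubmx w - P *m usubmx w); have := nrm2_ge0 (dsubmx w - P *m dsubmx w).
  rewrite -/P; lra.
have Bsym : B^T = B.
  have QT : Q^T = Q.
    by rewrite /Q linearD /= !trmx_mul !trmxK Ms mulmxA.
  rewrite /B tr_block_mx QT !linearZ /= !trmx_mul !trmxK !mulmxA.
  done.
have Bnu : ~~ (B \in unitmx).
  apply/negP => Bu; have [c [cpos hc]] := coercive Bsym psdB Bu.
  have [r Sr rlt] := inf_adherent cpos (conj S0 Shlb).
  case: Sr => x [y [Wx Wy wpos rE]].
  have := hc (col_mx x y); rewrite quadB nrm2_col !Ps_fix // !subrr.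
  have n0 : nrm2 (0 : 'cV[R]_(n + n)) = 0 by rewrite /nrm2 bf0l.
  rewrite n0 !addr0 => hc'.
  move: rlt; rewrite -/lam rE ltr_pdivrMr; last by rewrite mulr_gt0.
  have := twoJ_le x y; rewrite -/J => h2 h1.
  exact: (aux1 cpos wpos hc' h2 h1).
have [v vnz vB] : exists2 v : 'rV[R]_((n + n) + (n + n)), v != 0 & v *m B = 0.
  by apply/det0P; move: Bnu; rewrite unitmxE unitfE negbK.
set w := v^T.
have Bw : B *m w = 0 by rewrite /w -[B]Bsym -trmx_mul vB trmx0.
have wnz : w != 0 by rewrite /w trmx_eq0.
set x := usubmx w; set y := dsubmx w.
have wE : w = col_mx x y by rewrite vsubmxK.
have q0 : bf B w w = 0 by rewrite /bf -mulmxA Bw mulmx0 mxE.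
rewrite wE quadB in q0.
have := key _ _ (inW_Ps x hI) (inW_Ps y hI).
have := nrm2_ge0 (x - P *m x); have := nrm2_ge0 (y - P *m y).
rewrite -/P => hy hx hk.
have hk' : 0 <= bf M (P *m x) (P *m x) + bf M (P *m y) (P *m y) -
   2 * lam * bf J (P *m x) (P *m y) by rewrite subr_ge0.
have [nx ny] := aux2 hk' hx hy q0.
have Px : P *m x = x.
  by apply/eqP; rewrite eq_sym -subr_eq0; apply/eqP/nrm2_eq0.
have Py : P *m y = y.
  by apply/eqP; rewrite eq_sym -subr_eq0; apply/eqP/nrm2_eq0.
have Wx : inW j U V x by have := inW_Ps x hI; rewrite -/P Px.
have Wy : inW j U V y by have := inW_Ps y hI; rewrite -/P Py.
have [H1 H2] := hI.
have orthM : forall i : 'I_n, (i < j)%N -> forall z, inW j U V z ->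
    bf 1%:M (col i U) (M *m z) = 0 /\ bf 1%:M (col i V) (M *m z) = 0.
  move=> i hi z' Wz; have [dp eu ev] := H2 i hi; have [a b] := Wz i hi.
  split.
    rewrite -bf_mulr (bf_sym M) Ms bf_mulr eu bfZr -bf_mulr.
    by rewrite (bfJ_skew z') b oppr0 mulr0.
  rewrite -bf_mulr (bf_sym M) Ms bf_mulr ev bfZr -bf_mulr.
  by rewrite (bfJ_skew z') a oppr0 mulr0.
have QM : forall z : 'cV[R]_(n + n), P *m z = z -> Q *m z = P^T *m (M *m z).
  move=> z' Pz'; rewrite /Q mulmxDl -!mulmxA Pz' mulmxBl mul1mx Pz' subrr !mulmx0.
  by rewrite addr0.
move: Bw; rewrite wE mul_block_col => /eqP; rewrite col_mx_eq0 => /andP [/eqP e1 /eqP e2].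
rewrite QM // -!scalemxAl -!mulmxA Py scalemxAr -mulmxDr in e1.
rewrite QM // -!scalemxAl -!mulmxA Px scalemxAr -mulmxDr in e2.
rewrite Ps_tr_fix in e1; last first.
  move=> i hi; have [a b] := orthM i hi x Wx; have [c e] := Wy i hi.
  by rewrite !bfDr !bfZr a b -!(bf_mulr J) c e mulr0 addr0.
rewrite Ps_tr_fix in e2; last first.
  move=> i hi; have [a b] := orthM i hi y Wy; have [c e] := Wx i hi.
  rewrite !bfDr !bfZr a b -!(bf_mulr J^T).
  split.
    by rewrite (bf_sym J^T) trmxK (bfJ_skew x) c oppr0 mulr0 addr0.
  by rewrite (bf_sym J^T) trmxK (bfJ_skew x) e oppr0 mulr0 addr0.
have Mx : M *m x = lam *: (J *m y).
  by apply/eqP; rewrite -subr_eq0 -scaleNr e1.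
have My : M *m y = - lam *: (J *m x).
  apply/eqP; rewrite -subr_eq0 scaleNr opprK; move: e2.
  by rewrite /J J_tr mulNmx scalerN scaleNr opprK addrC => ->.
have xnz : x != 0.
  apply/negP => /eqP x0'; move: wnz; rewrite wE x0'.
  have y0' : y = 0.
    case: (eqVneq y 0) => // ynz; have := Mpd y ynz.
    by rewrite -/(bf M y y) bf_mulr My x0' mulmx0 scaler0 bf0r ltxx.
  by rewrite y0' col_mx0 eqxx.
have hxx : bf M x x = lam * bf J x y by rewrite bf_mulr Mx bfZr -bf_mulr.
have pos : 0 < lam * bf J x y by rewrite -hxx; exact: Mpd.
have lampos : 0 < lam.
  rewrite lt_neqAle lam0 andbT; apply/eqP => l0; move: pos; by rewrite -l0 mul0r ltxx.
have wpos : 0 < bf J x y by rewrite -(pmulr_rgt0 _ lampos).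
set s := (Num.sqrt (bf J x y))^-1.
have ss : s * s * bf J x y = 1.
  rewrite /s -expr2 exprVn sqr_sqrtr; last exact: ltW.
  by rewrite mulVf // gt_eqF.
exists (s *: x), (s *: y), lam; split => //.
- exact: inWZ.
- exact: inWZ.
- by rewrite bfZl bfZr mulrA.
- split.
  + by rewrite -!scalemxAr Mx !scalerA mulrC.
  + by rewrite -!scalemxAr My !scalerA mulrC.
Qed.

Definition upd (R : realType) N n (U : 'M[R]_(N, n)) (c : 'I_n) (u : 'cV[R]_N) : 'M[R]_(N, n) :=
  \matrix_(r, s) if s == c then u r 0 else U r s.

Lemma col_upd (R : realType) N n (U : 'M[R]_(N, n)) c u i :
  col i (upd U c u) = if i == c then u else col i U.
Proof. by apply/colP => r; rewrite !mxE; case: eqP => // _; rewrite mxE. Qed.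

Lemma Inv_step (R : realType) n (M : 'M[R]_(n + n)) j U V d :
  spd M -> (j < n)%N -> Inv M j U V d -> exists U' V' d', Inv M j.+1 U' V' d'.
Proof.
move=> Mspd jn hI.
have [x [y [lam [lp Wx Wy wxy [Mx My]]]]] := pair_exists Mspd jn hI.
have [H1 H2] := hI.
set c := Ordinal jn.
have ceq : forall i : 'I_n, (i == c) = (nat_of_ord i == j) by [].
have lt_or : forall i : 'I_n, (i < j.+1)%N -> (i == c) || (i < j)%N.
  by move=> i; rewrite ceq ltnS leq_eqVlt.
have ltc : forall i : 'I_n, (i < j)%N -> (i == c) = false.
  by move=> i hi; rewrite ceq; apply/negbTE; rewrite neq_ltn hi.
exists (upd U c x), (upd V c y), (\row_i if i == c then lam else d 0 i); split.
- move=> i l hi hl; rewrite !col_upd.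
  case/orP: (lt_or i hi) => [/eqP -> | hi'].
    rewrite eqxx; case/orP: (lt_or l hl) => [/eqP -> | hl'].
      by rewrite eqxx !bfJ_xx wxy.
    rewrite (ltc l hl') eq_sym (ltc l hl'); have [a b] := Wx l hl'; have [e f] := Wy l hl'.
    by rewrite bfJ_skew a (bfJ_skew y) f (bfJ_skew x) b oppr0.
  rewrite (ltc i hi'); case/orP: (lt_or l hl) => [/eqP -> | hl'].
    rewrite eqxx (ltc i hi'); have [a b] := Wx i hi'; have [e f] := Wy i hi'.
    by split.
  by rewrite (ltc l hl'); exact: H1.
- move=> i hi; rewrite !col_upd mxE.
  case/orP: (lt_or i hi) => [/eqP -> | hi']; first by rewrite eqxx.
  by rewrite (ltc i hi'); exact: H2.
Qed.

Lemma Inv_all (R : realType) n (M : 'M[R]_(n + n)) :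
  spd M -> forall j, (j <= n)%N -> exists U V d, Inv M j U V d.
Proof.
move=> Mspd; elim=> [|j IH] jn.
  by exists 0, 0, 0; split => i.
have [U [V [d hI]]] := IH (ltnW jn).
exact: Inv_step Mspd jn hI.
Qed.


Lemma williamson_exists (R : realType) n (M : 'M[R]_(n + n)) :
  spd M -> exists S d, williamson M S d.
Proof.
move=> Mspd; have [U [V [d [H1 H2]]]] := Inv_all Mspd (leqnn n).
have ltn' : forall i : 'I_n, (i < n)%N by move=> i; exact: ltn_ord.
exists (row_mx U V), d; split; [|split].
- rewrite /symplectic tr_row_mx mul_col_mx mul_col_row [X in _ = X]/Jmx.
  congr block_mx; apply/matrixP => i l; rewrite entry_bf !mxE.
  + by have [-> _ _] := H1 i l (ltn' i) (ltn' l).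
  + by have [_ _ ->] := H1 i l (ltn' i) (ltn' l).
  + by rewrite bfJ_skew; have [_ _ ->] := H1 l i (ltn' l) (ltn' i); rewrite eq_sym.
  + by have [_ -> _] := H1 i l (ltn' i) (ltn' l).
- by move=> i; have [] := H2 i (ltn' i).
- rewrite tr_row_mx mul_col_mx mul_col_row.
  congr block_mx; apply/matrixP => i l; rewrite entry_bf !mxE bf_mulr;
    have [dp eu ev] := H2 l (ltn' l); rewrite ?eu ?ev bfZr -bf_mulr.
  + have [_ _ ->] := H1 i l (ltn' i) (ltn' l).
    case: (eqVneq i l) => [->|ne]; first by rewrite ?eqxx /= mulr1.
    by rewrite ?(negbTE ne) /= mulr0.
  + by have [-> _ _] := H1 i l (ltn' i) (ltn' l); rewrite mulr0.
  + by have [_ -> _] := H1 i l (ltn' i) (ltn' l); rewrite mulr0.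
  + rewrite bfJ_skew; have [_ _ ->] := H1 l i (ltn' l) (ltn' i).
    rewrite mulrNN; case: (eqVneq i l) => [->|ne]; first by rewrite ?eqxx /= mulr1.
    by rewrite /= mulr0.
Qed.

Definition Emx (R : realType) k (delta : 'rV[R]_k) : 'M[R]_(k + k) :=
  block_mx 0 (- diag_mx delta) (diag_mx delta) 0.

Lemma col_mulmx (R : realType) m n p (A : 'M[R]_(m, n)) (B : 'M[R]_(n, p)) j :
  col j (A *m B) = A *m col j B.
Proof. by rewrite !colE mulmxA. Qed.

Lemma aux3 (R : realType) (a b p q : R) : 0 < a -> 0 < b -> p != 0 ->
  a * p = q * b -> a * q = p * b -> a = b.
Proof.
move=> ha hb hp h1 h2.
have e : (a * a - b * b) * p = a * (a * p - q * b) + b * (a * q - p * b) by ring.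
rewrite h1 h2 !subrr !mulr0 addr0 in e.
move/eqP: e; rewrite mulf_eq0 (negbTE hp) orbF subr_eq0 => /eqP e.
have : (a - b) * (a + b) = 0 by rewrite mulrBl !mulrDr e; ring.
move/eqP; rewrite mulf_eq0 => /orP [/eqP h|/eqP h]; first by apply/eqP; rewrite -subr_eq0 h.
have : 0 < a + b by rewrite addr_gt0.
by rewrite h ltxx.
Qed.

Lemma eig_in (R : realType) n k (M : 'M[R]_(n + n)) S d (X : 'M[R]_(n + n, k + k))
    (delta : 'rV[R]_k) :
  williamson M S d -> M *m X = Jmx R n *m X *m Emx delta ->
  (forall i : 'I_k, col (lshift k i) X != 0) -> (forall i, 0 < delta 0 i) ->
  forall i, exists r : 'I_n, d 0 r = delta 0 i.
Proof.
move=> [Ssym [dpos SMS]] MX Xnz dlp i.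
set J := Jmx R n.
set A := - (J *m (S^T *m J)).
have AS : A *m S = 1%:M.
  by rewrite /A mulNmx -mulmxA Ssym J_mulJ opprK.
have SA : S *m A = 1%:M := mulmx1C AS.
set Y := A *m X.
have SY : S *m Y = X by rewrite /Y mulmxA SA mul1mx.
have eq : block_mx (diag_mx d) 0 0 (diag_mx d) *m Y = J *m Y *m Emx delta.
  by have := congr1 (mulmx S^T) MX; rewrite -SY !mulmxA SMS Ssym.
rewrite -[Y]submxK /J /Jmx /Emx !mulmx_block in eq.
rewrite ?mulmx0 ?mul0mx ?addr0 ?add0r ?mul1mx ?mulNmx ?mulmxN ?mulmx0 ?addr0 ?add0r ?oppr0 in eq.
move/eq_block_mx: eq => [e11 e12 e21 e22].
rewrite mul1mx opprK in e22; rewrite mul1mx in e21.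
have Ynz : col (lshift k i) Y != 0.
  apply/negP => /eqP h; move: (Xnz i); by rewrite -SY col_mulmx h mulmx0 eqxx.
case: (boolP [exists r, ulsubmx Y r i != 0]) => [/existsP [r hr] | h1].
  exists r; apply: (aux3 (q := drsubmx Y r i) (dpos r) (dlp i) hr).
    have h := congr1 (fun B : 'M[R]_(n, k) => B r i) e11.
    rewrite mul_diag_mx mul_mx_diag !mxE in h; rewrite !mxE; exact: h.
  have h := congr1 (fun B : 'M[R]_(n, k) => B r i) e22.
  rewrite mul_diag_mx mul_mx_diag !mxE in h; rewrite !mxE; exact: h.
case: (boolP [exists r, dlsubmx Y r i != 0]) => [/existsP [r hr] | h2].
  exists r; apply: (aux3 (q := - ursubmx Y r i) (dpos r) (dlp i) hr).
    have h := congr1 (fun B : 'M[R]_(n, k) => B r i) e21.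
    rewrite mul_diag_mx mul_mx_diag !mxE in h; rewrite !mxE h; by rewrite mulNr.
  have h := congr1 (fun B : 'M[R]_(n, k) => B r i) e12.
  rewrite mul_diag_mx mul_mx_diag !mxE in h; rewrite !mxE mulrN h; by rewrite opprK.
rewrite negb_exists in h1; rewrite negb_exists in h2.
clearbody Y; case/negP: Ynz; apply/eqP/colP => r; rewrite !mxE -[r](splitK).
case: (split r) => r' /=.
  by have := forallP h1 r'; rewrite negbK !mxE => /eqP.
by have := forallP h2 r'; rewrite negbK !mxE => /eqP.
Qed.

Lemma aux4 (R : realType) (a b p q : R) : 0 < a -> 0 < b -> a != b ->
  a * p = q * b -> a * q = p * b -> p = 0.
Proof.
move=> ha hb hab h1 h2.
have e : (a * a - b * b) * p = a * (a * p - q * b) + b * (a * q - p * b) by ring.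
rewrite h1 h2 !subrr !mulr0 addr0 in e.
move/eqP: e; rewrite mulf_eq0 => /orP [|/eqP //].
have e2 : a * a - b * b = (a - b) * (a + b) by ring.
rewrite e2 mulf_eq0 subr_eq0 (negbTE hab) /= => /eqP h.
have : 0 < a + b by rewrite addr_gt0.
by rewrite h ltxx.
Qed.

Lemma diag_comm (R : realType) k (a b : 'rV[R]_k) :
  diag_mx a *m diag_mx b = diag_mx b *m diag_mx a.
Proof.
apply/matrixP => r l; rewrite mul_diag_mx mul_mx_diag !mxE.
by case: eqP => [->|_]; rewrite ?mulr1n ?mulr0n ?mulr0 ?mul0r // mulrC.
Qed.

Lemma Nt_unit (R : realType) k (nu : 'rV[R]_k) : (forall i, 0 < nu 0 i) ->
  block_mx (diag_mx nu) 0 0 (diag_mx nu) \in unitmx.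
Proof.
move=> hp; rewrite unitmxE unitfE det_ublock det_diag mulf_neq0 //;
  by apply/prodf_neq0 => i _; rewrite gt_eqF.
Qed.

Lemma Nt_tr (R : realType) k (nu : 'rV[R]_k) :
  (block_mx (diag_mx nu) 0 0 (diag_mx nu))^T = block_mx (diag_mx nu) 0 0 (diag_mx nu).
Proof. by rewrite tr_block_mx !trmx0 tr_diag_mx. Qed.

Lemma E_tr (R : realType) k (d : 'rV[R]_k) : (Emx d)^T = - Emx d.
Proof.
by rewrite /Emx tr_block_mx !trmx0 linearN /= tr_diag_mx opp_block_mx !oppr0 opprK.
Qed.

Lemma NtE_comm (R : realType) k (nu d : 'rV[R]_k) :
  block_mx (diag_mx nu) 0 0 (diag_mx nu) *m Emx d = Emx d *m block_mx (diag_mx nu) 0 0 (diag_mx nu).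
Proof.
rewrite /Emx !mulmx_block ?mulmx0 ?mul0mx ?addr0 ?add0r ?mulmxN ?mulNmx.
by rewrite (diag_comm nu d).
Qed.

Unset Implicit Arguments.

Theorem theorem3p4 (R : realType) (n k : nat) (M : 'M[R]_(n + n))
    (nu : 'rV[R]_k) (X : 'M[R]_(n + n, k + k)) :
  spd M -> (1 <= k)%N -> (k <= n)%N ->
  (forall i : 'I_k, 0 < nu 0 i) ->
  (forall i j : 'I_k, (i < j)%N -> nu 0 i < nu 0 j) ->
  critical_point M nu X <-> sympl_eigvec_set M X.
Proof.
move=> Mspd k1 kn nupos numono.
have Ntu := Nt_unit nupos.
set Nt := block_mx (diag_mx nu) 0 0 (diag_mx nu) in Ntu *.
split; last first.
  move=> [XJX [delta [_ MX]]]; split => //.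
  exists (Emx delta *m Nt); split.
    by rewrite trmx_mul E_tr Nt_tr mulmxN NtE_comm.
  by rewrite MX /Emx mulmxA.
move=> [XJX [L [Lskew HL]]].
set J := Jmx R n in HL XJX *; set Jk := Jmx R k in XJX *.
set P := X^T *m M *m X.
have [Ms Mpd] := Mspd.
have PT : P^T = P by rewrite /P !trmx_mul trmxK Ms mulmxA.
have PN : P *m Nt = Jk *m L.
  by have := congr1 (mulmx X^T) HL; rewrite !mulmxA XJX.
have Pdef : P = X^T *m M *m X by [].
clearbody P.
have LE : L = Jk^T *m P *m Nt.
  by rewrite -mulmxA PN mulmxA /Jk J_trJ mul1mx.
have comm : Nt *m P *m Jk = Jk *m P *m Nt.
  move: Lskew; rewrite LE !trmx_mul trmxK PT Nt_tr /Jk J_tr !mulNmx opprK.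
  by rewrite mulmxA => ->.
rewrite -[P]submxK /Nt /Jk /Jmx !mulmx_block in comm.
rewrite ?mulmx0 ?mul0mx ?addr0 ?add0r ?mulmx1 ?mul1mx ?mulmxN ?mulNmx ?mulmx0 ?addr0 ?add0r ?oppr0 in comm.
move/eq_block_mx: comm => [c1 c2 c3 c4].
move: PT; rewrite -[P]submxK tr_block_mx => /eq_block_mx [t1 t2 t3 t4].
rewrite ?mulmx1 ?mul1mx in c1 c3 c4; move/oppr_inj: c3 => c3.
set Aq := ulsubmx P in c1 c2 c3 c4 t1 t2 t3 t4.
set Bq := ursubmx P in c1 c2 c3 c4 t1 t2 t3 t4.
set Cq := dlsubmx P in c1 c2 c3 c4 t1 t2 t3 t4.
set Dq := drsubmx P in c1 c2 c3 c4 t1 t2 t3 t4.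
have ent : forall (Y Z : 'M[R]_k), diag_mx nu *m Y = Z *m diag_mx nu ->
    forall r l, nu 0 r * Y r l = Z r l * nu 0 l.
  by move=> Y Z h r l; have := congr1 (fun B : 'M[R]_k => B r l) h;
     rewrite mul_diag_mx mul_mx_diag !mxE.
have entN : forall (Y Z : 'M[R]_k), - (diag_mx nu *m Y) = Z *m diag_mx nu ->
    forall r l, - (nu 0 r * Y r l) = Z r l * nu 0 l.
  by move=> Y Z h r l; have := congr1 (fun B : 'M[R]_k => B r l) h;
     rewrite mul_diag_mx mul_mx_diag !mxE.
have entN' : forall (Y Z : 'M[R]_k), diag_mx nu *m Y = - (Z *m diag_mx nu) ->
    forall r l, nu 0 r * Y r l = - (Z r l * nu 0 l).
  by move=> Y Z h r l; have := congr1 (fun B : 'M[R]_k => B r l) h;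
     rewrite mul_diag_mx mul_mx_diag !mxE.
have nud : forall r l : 'I_k, r != l -> nu 0 r != nu 0 l.
  move=> r l; case: (ltngtP r l) => [h|h|/val_inj ->]; last by rewrite eqxx.
  - by move=> _; rewrite lt_eqF // numono.
  - by move=> _; rewrite gt_eqF // numono.
have hA : forall r l, r != l -> Aq r l = 0.
  move=> r l ne; apply: (aux4 (q := Dq r l) (nupos r) (nupos l) (nud r l ne)).
  - exact: ent c2 r l.
  - exact: ent c3 r l.
have hD : forall r l, r != l -> Dq r l = 0.
  move=> r l ne; apply: (aux4 (q := Aq r l) (nupos r) (nupos l) (nud r l ne)).
  - exact: ent c3 r l.
  - exact: ent c2 r l.
have hAD : forall r, Dq r r = Aq r r.
  move=> r; have := ent _ _ c2 r r; rewrite mulrC => /(mulIf (negbT (gt_eqF (nupos r)))) h.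
  by rewrite h.
have hCB : forall r l, Cq r l = Bq l r.
  by move=> r l; rewrite -t2 [RHS]mxE.
have hB : forall r l, Bq r l = 0.
  move=> r l; case: (eqVneq r l) => [<-|ne].
    have := entN _ _ c1 r r; rewrite hCB => h.
    have : nu 0 r * Bq r r = 0 by lra.
    by move/eqP; rewrite mulf_eq0 gt_eqF //= => /eqP.
  apply: (aux4 (q := - Cq r l) (nupos r) (nupos l) (nud r l ne)).
  - by rewrite mulNr -(entN _ _ c1 r l) opprK.
  - by rewrite mulrN (entN' _ _ c4 r l) opprK.
have hC : forall r l, Cq r l = 0 by move=> r l; rewrite hCB hB.
pose Dl := \row_r Aq r r.
have DlE : forall r, Dl 0 r = Aq r r by move=> r; rewrite /Dl [LHS]mxE.
have Pblock : P = block_mx (diag_mx Dl) 0 0 (diag_mx Dl).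
  rewrite -[P]submxK -/Aq -/Bq -/Cq -/Dq; congr block_mx; apply/matrixP => r l.
  - rewrite [RHS]mxE DlE; case: (eqVneq r l) => [<-|ne] /=; first by rewrite mulr1n.
    by rewrite mulr0n hA.
  - by rewrite [RHS]mxE hB.
  - by rewrite [RHS]mxE hC.
  - rewrite [RHS]mxE DlE; case: (eqVneq r l) => [<-|ne] /=; first by rewrite mulr1n hAD.
    by rewrite mulr0n hD.
have MX : M *m X = J *m X *m Emx Dl.
  have h : M *m X *m Nt = J *m X *m (Jk^T *m P) *m Nt.
    by rewrite -/Nt in HL; rewrite HL LE !mulmxA.
  have := congr1 (mulmx^~ (invmx Nt)) h; rewrite /= !mulmxK // => ->.
  congr (_ *m _); rewrite Pblock /Jk J_tr /Jmx /Emx mulNmx mulmx_block.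
  rewrite ?mulmx0 ?mul0mx ?addr0 ?add0r ?mulmx1 ?mul1mx ?mulNmx ?opp_block_mx ?oppr0 ?opprK.
  by rewrite mul1mx.
have hx : forall r : 'I_k, col (lshift k r) X != 0.
  move=> r; apply/negP => /eqP h0.
  have := congr1 (fun B : 'M[R]_(k + k) => B (lshift k r) (rshift k r)) XJX.
  rewrite /= entry_bf h0 bf0l /Jk /Jmx block_mxEur mxE eqxx /= => /eqP.
  by rewrite eq_sym oner_eq0.
have Dpos : forall r, 0 < Dl 0 r.
  move=> r; rewrite DlE /Aq mxE mxE Pdef entry_bf; exact: Mpd.
have [S [d W]] := williamson_exists Mspd.
have [idx hidx] := fin_all_exists (eig_in W MX hx Dpos).
split => //; exists Dl; split => //.
by exists S, d; split => //; exists idx => j; rewrite hidx.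
Qed.
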